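(* For every $k,m,r\in\mathbb{N}$ there is $n\in\mathbb{N}$ such that for every $c:M^{\mathrm{ba}}_{n,k}\to r$ there is $R\in M^{\mathrm{oba}}_{n,m}$ such that the color $c(R\cdot B)$ depends only on $\pi(B)$ for $B\in M^{\mathrm{ba}}_{m,k}$; that is, there is $\widehat{c}:\mathcal{S}_k\to r$ with $c(R\cdot B)=\widehat{c}(\pi(B))$ for every $B\in M^{\mathrm{ba}}_{m,k}$.
   Context: $r$ is identified with $\{0,\dots,r-1\}$. $M^{\mathrm{ba}}_{n,k}$ (Boolean matrices) is the set of $n\times k$ matrices with entries in $\{0,1\}$ whose columns, viewed as subsets $P_0,\dots,P_{k-1}$ of $\{0,\dots,n-1\}$, form a partition of $\{0,\dots,n-1\}$ into $k$ (nonempty) pieces. $M^{\mathrm{oba}}_{n,k}$ is the set of those in $M^{\mathrm{ba}}_{n,k}$ with $\min P_i<\min P_{i+1}$ for all $i<k-1$. $\mathcal{S}_k$ is the group of permutations of $k$, identified with $k\times k$ permutation matrices, and $\pi:M^{\mathrm{ba}}_{n,k}\to\mathcal{S}_k$ assigns to $A$ the unique $\pi(A)\in\mathcal{S}_k$ with $A\cdot\pi(A)\in M^{\mathrm{oba}}_{n,k}$. *)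

(* Defs.v *)
From mathcomp Require Import all_boot all_order all_algebra all_fingroup.
Set Implicit Arguments. Unset Strict Implicit. Unset Printing Implicit Defensive.
Import GRing.Theory.

(* Boolean matrices are represented as matrices over nat with entries in {0,1};
   products R *m B are ordinary (semiring nat) matrix products. *)

(* A \in M^ba_{n,k}: 0/1 entries, each row has exactly one 1 (columns are
   pairwise disjoint and cover {0..n-1}), and every column is nonempty. *)
Definition is_ba (n k : nat) (A : 'M[nat]_(n, k)) : bool :=
  [forall i, forall j, A i j <= 1]%N &&
  [forall i : 'I_n, #|[set j : 'I_k | A i j == 1%N]| == 1%N] &&
  [forall j : 'I_k, exists i : 'I_n, A i j == 1%N].

(* min P_j (the default n is only used for empty columns) *)
Definition minrow (n k : nat) (A : 'M[nat]_(n, k)) (j : 'I_k) : nat :=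
  \big[minn/n]_(i : 'I_n | A i j == 1%N) (i : nat).

Definition is_oba (n k : nat) (A : 'M[nat]_(n, k)) : bool :=
  is_ba A &&
  [forall j : 'I_k, forall j' : 'I_k,
     (nat_of_ord j' == (nat_of_ord j).+1) ==> (minrow A j < minrow A j')%N].

(* pi(A): the (unique, for A in M^ba) permutation s with A *m perm_mx s in M^oba *)
Definition piM (n k : nat) (A : 'M[nat]_(n, k)) : {perm 'I_k} :=
  odflt 1%g [pick s : {perm 'I_k} | is_oba (A *m perm_mx s)].

(* Main.v *)
Require Import Defs.
From Stdlib Require Import ClassicalEpsilon.
From mathcomp Require Import all_boot all_order all_algebra all_fingroup.
From mathcomp Require Import zify.
Set Implicit Arguments. Unset Strict Implicit. Unset Printing Implicit Defensive.


Definition pcomp (a : nat) (f g : seq nat) : seq nat :=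
  map (fun x => if x < a then x else nth 0 g (x - a)) f.

Definition PW (a n k : nat) (w : seq nat) : Prop :=
  [/\ size w = n, {in w, forall x, x < a + k},
      (forall j, j < k -> a + j \in w) &
      (forall j j', j < j' -> j' < k -> index (a + j) w < index (a + j') w)].

Lemma index_charP (x : nat) s i : i < size s -> nth 0 s i = x ->
  (forall i', i' < i -> nth 0 s i' != x) -> index x s = i.
Proof.
elim: s i => [|y s IH] [|i] //=.
- by move=> _ ->; rewrite eqxx.
- move=> Hi Hn Hb. have := Hb 0 isT => /= /negbTE; rewrite eq_sym => ->.
  congr S; apply: IH => // i' Hi'; exact: (Hb i'.+1).
Qed.

Lemma index_leP (x : nat) s i : i < size s -> nth 0 s i = x -> index x s <= i.
Proof.
move=> Hi Hn; rewrite leqNgt; apply/negP => H.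
have := before_find 0 H; by rewrite Hn /= eqxx.
Qed.

Lemma nth_before_index (x : nat) s i : i < index x s -> nth 0 s i != x.
Proof. by move=> H; have := before_find 0 H => /= ->. Qed.

Lemma comp_index a n m k f g j : PW a n m f -> PW a m k g -> j < k ->
  index (a + j) (pcomp a f g) = index (a + index (a + j) g) f.
Proof.
case=> sf lf of_ ordf [sg lg og ordg] jk.
set i0 := index (a + j) g.
have i0m : i0 < m by rewrite -sg index_mem og.
have fin : a + i0 \in f by apply: of_.
set q := index (a + i0) f.
have qn : q < size f by rewrite index_mem.
apply: index_charP.
- by rewrite size_map.
- rewrite (nth_map 0) // nth_index // ifF; last by lia.
  by rewrite addKn nth_index // og.
- move=> q' q'q.
  have q'n : q' < size f by apply: ltn_trans qn.
  rewrite (nth_map 0) //.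
  have nb := nth_before_index q'q.
  have := lf _ (mem_nth 0 q'n).
  case: ifP => ya yl; first by apply/eqP; lia.
  set y := nth 0 f q' in nb ya yl *.
  apply/negP => /eqP E.
  have ii : i0 <= y - a by apply: index_leP; [rewrite sg; lia | done].
  have yy : y = a + (y - a) by lia.
  have ne : i0 != y - a by apply/negP => /eqP e; move: nb; rewrite yy -e eqxx.
  have lt : i0 < y - a by rewrite ltn_neqAle ne.
  have := ordf _ _ lt ltac:(lia).
  have : index (a + (y - a)) f <= q' by apply: index_leP => //; rewrite -yy.
  rewrite -/q; lia.
Qed.

Lemma comp_PW a n m k f g : PW a n m f -> PW a m k g -> PW a n k (pcomp a f g).
Proof.
move=> Hf Hg; have [sf lf of_ ordf] := Hf; have [sg lg og ordg] := Hg.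
split.
- by rewrite size_map.
- move=> x /mapP [y yf ->]. case: ifP => ya; first by lia.
  apply: lg; apply: mem_nth; rewrite sg; have := lf _ yf; lia.
- move=> j jk. rewrite -index_mem (comp_index Hf Hg jk) size_map index_mem.
  apply: of_. by rewrite -sg index_mem og.
- move=> j j' jj jk. rewrite !(comp_index Hf Hg) //; last by lia.
  apply: ordf; last by rewrite -sg index_mem og.
  exact: ordg.
Qed.

Lemma comp_assoc a f g h : {in f, forall x, x < a + size g} ->
  pcomp a (pcomp a f g) h = pcomp a f (pcomp a g h).
Proof.
move=> H; rewrite /pcomp -map_comp; apply/eq_in_map => x xf /=.
case xa: (x < a); first by rewrite xa.
rewrite (nth_map 0) //; have := H _ xf; lia.
Qed.

Lemma comp_cat a f1 f2 g : pcomp a (f1 ++ f2) g = pcomp a f1 g ++ pcomp a f2 g.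
Proof. exact: map_cat. Qed.

Lemma comp_const a f g : {in f, forall x, x < a} -> pcomp a f g = f.
Proof.
move=> H; rewrite /pcomp -[RHS]map_id; apply/eq_in_map => x xf.
by rewrite H.
Qed.

Lemma PW_size a n k w : PW a n k w -> size w = n. Proof. by case. Qed.

Lemma comp_letters a c f g : {in g, forall z, z < c} -> a <= c -> 0 < c ->
  {in pcomp a f g, forall z, z < c}.
Proof.
move=> Hg ac c0 z /mapP [y yf ->]. case: ifP => ya; first by lia.
case: (ltnP (y - a) (size g)) => H; first by apply: Hg; apply: mem_nth.
by rewrite nth_default.
Qed.

Definition fromF L b (f : {ffun 'I_L -> 'I_b.+1}) : seq nat := [seq (f i : nat) | i <- enum 'I_L].
Definition toF L b (s : seq nat) : {ffun 'I_L -> 'I_b.+1} := [ffun i : 'I_L => inord (nth 0 s i)].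

Lemma fromF_toF L b s : size s = L -> {in s, forall z, z <= b} -> fromF (toF L b s) = s.
Proof.
move=> ss Hs; rewrite /fromF.
have -> : [seq (toF L b s i : nat) | i <- enum 'I_L] = [seq nth 0 s (val i) | i <- enum 'I_L].
  apply/eq_in_map => i _; rewrite ffunE inordK //.
  have: nth 0 s i <= b by apply: Hs; apply: mem_nth; rewrite ss.
  lia.
by rewrite (map_comp (nth 0 s) val) val_enum_ord -ss map_nth_iota0 // take_size.
Qed.

Lemma PW_cat1 a n1 n2 u v : PW a n1 1 u -> size v = n2 -> {in v, forall z, z < a.+1} ->
  PW a (n1 + n2) 1 (u ++ v).
Proof.
case=> su lu ou _ sv lv; split.
- by rewrite size_cat su sv.
- move=> z; rewrite mem_cat => /orP [] H; [exact: lu | have := lv _ H; lia].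
- by move=> j j1; rewrite mem_cat ou.
- lia.
Qed.

Lemma PW_cat_const a n k c w : {in c, forall z, z < a} -> PW a n k w -> PW a (size c + n) k (c ++ w).
Proof.
move=> Hc [sw lw ow ordw]; split.
- by rewrite size_cat sw.
- move=> z; rewrite mem_cat => /orP [] H; [have := Hc _ H; lia | exact: lw].
- by move=> j jk; rewrite mem_cat ow ?orbT.
- move=> j j' jj jk.
  have nc : forall t, a + t \notin c by move=> t; apply/negP => /Hc; lia.
  rewrite !index_cat (negbTE (nc _)) (negbTE (nc _)) ltn_add2l; exact: ordw.
Qed.

Definition HJ a := forall T : finType, exists N, forall chi : seq nat -> T,
  exists L, PW a N 1 L /\ forall x, x < a -> chi (pcomp a L [:: x]) = chi (pcomp a L [:: 0]).

Lemma HJ1 : HJ 1.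
Proof.
move=> T; exists 1 => chi; exists [:: 1]; split; last by case.
split => //.
- by move=> z; rewrite inE => /eqP ->.
- by case.
- lia.
Qed.

Definition Foc a (T : finType) N s : Prop := forall chi : seq nat -> T,
 (exists L, PW a.+1 N 1 L /\ forall x, x <= a -> chi (pcomp a.+1 L [:: x]) = chi (pcomp a.+1 L [:: a]))
 \/ (exists f (Ls : nat -> seq nat) (cs : nat -> T),
      [/\ size f = N, {in f, forall z, z < a.+1},
      (forall i, i < s -> [/\ PW a.+1 N 1 (Ls i), pcomp a.+1 (Ls i) [:: a] = f &
            forall x, x < a -> chi (pcomp a.+1 (Ls i) [:: x]) = cs i]) &
      (forall i j, i < s -> j < s -> cs i = cs j -> i = j)]).

Lemma foc0 a T : Foc a T 0 0.
Proof.
move=> chi; right; exists [::], (fun _ => [::]), (fun _ => chi [::]); split => //.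
Qed.

Lemma lift1_comp a l x : {in l, forall z, z <= a} ->
  pcomp a.+1 (map (fun z => if z < a then z else a.+1) l) [:: x] = pcomp a l [:: x].
Proof.
move=> H; rewrite /pcomp -map_comp; apply/eq_in_map => z zl /=.
case za: (z < a) => /=; first by rewrite ltnS ltnW.
have -> : z = a by have := H _ zl; lia.
by rewrite !ltnn !subnn.
Qed.

Lemma foc_step a (T : finType) s : 0 < a -> HJ a -> (exists N, Foc a T N s) -> exists N, Foc a T N s.+1.
Proof.
move=> a0 hj [N2 foc].
pose T' := {ffun {ffun 'I_N2 -> 'I_a.+1} -> T}.
have [N1 hjN] := hj T'.
exists (N1 + N2) => chi.
pose chi' (x : seq nat) : T' := [ffun f => chi (x ++ fromF f)].
have [l [Pl Hl]] := hjN chi'.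
have [sl ll ol _] := Pl.
pose l0 := pcomp a l [:: 0].
have l0a : {in l0, forall z, z < a}.
  by apply: comp_letters => // z; rewrite inE => /eqP ->.
have sl0 : size l0 = N1 by rewrite size_map.
pose chi'' y := chi (l0 ++ y).
have K : forall x y, x < a -> size y = N2 -> {in y, forall z, z <= a} ->
    chi (pcomp a l [:: x] ++ y) = chi'' y.
  move=> x y xa sy ly.
  have := congr1 (fun F : T' => F (toF N2 a y)) (Hl x xa).
  by rewrite /chi' !ffunE fromF_toF.
have cl0 : forall Y, pcomp a.+1 (l0 ++ Y) [:: a] = l0 ++ pcomp a.+1 Y [:: a].
  move=> Y; rewrite comp_cat comp_const // => z /l0a; lia.
have cl0x : forall Y x, pcomp a.+1 (l0 ++ Y) [:: x] = l0 ++ pcomp a.+1 Y [:: x].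
  move=> Y x; rewrite comp_cat comp_const // => z /l0a; lia.
have Pcat : forall Y, PW a.+1 N2 1 Y -> PW a.+1 (N1 + N2) 1 (l0 ++ Y).
  move=> Y PY; rewrite -sl0; apply: PW_cat_const => // z /l0a; lia.
have [[L'' [PL HL]] | [f [Ls [cs [sf lf HLs inj]]]]] := foc chi''.
  left; exists (l0 ++ L''); split; first exact: Pcat.
  by move=> x xa; rewrite !cl0x; apply: HL.
case: (boolP [exists i : 'I_s, cs i == chi'' f]).
  move=> /existsP [i /eqP ci]; left; exists (l0 ++ Ls i).
  have [PLi fLi cLi] := HLs i (ltn_ord i).
  split; first exact: Pcat.
  move=> x; rewrite leq_eqVlt => /orP [/eqP -> // | xa].
  rewrite !cl0x; rewrite -/(chi'' _) -/(chi'' _) cLi // fLi ci //.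
move=> nex.
pose l' := map (fun z => if z < a then z else a.+1) l.
have lla : {in l, forall z, z <= a} by move=> z /ll; lia.
have Pl' : PW a.+1 N1 1 l'.
  split.
  - by rewrite size_map.
  - move=> z /mapP [y _ ->]; case: ifP; lia.
  - move=> j; rewrite ltnS leqn0 => /eqP ->; apply/mapP; exists a.
      by have := ol 0 isT; rewrite addn0.
    by rewrite ltnn addn0.
  - lia.
right; exists (pcomp a l [:: a] ++ f).
exists (fun i => if i < s then l' ++ Ls i else l' ++ f).
exists (fun i => if i < s then cs i else chi'' f).
split.
- by rewrite size_cat size_map sl sf.
- move=> z; rewrite mem_cat => /orP [] H; last exact: lf.
  move: H; apply: (comp_letters (c := a.+1)) => //.
  by move=> y; rewrite inE => /eqP ->.
- move=> i; rewrite ltnS leq_eqVlt => /orP [/eqP -> | ils]; rewrite ?ltnn ?ils.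
  + split.
    * rewrite -sf; apply: PW_cat1 => //; move=> z /lf; lia.
    * by rewrite comp_cat lift1_comp // (comp_const _ lf).
    * move=> x xa; rewrite comp_cat lift1_comp // (comp_const _ lf).
      by apply: K => //; move=> z /lf; lia.
  + have [PLi fLi cLi] := HLs i ils.
    have [sLi lLi _ _] := PLi.
    split.
    * apply: (PW_cat1 Pl' sLi) => z /lLi; lia.
    * by rewrite comp_cat lift1_comp // fLi.
    * move=> x xa; rewrite comp_cat lift1_comp // K //; first exact: cLi.
      - by rewrite size_map sLi.
      - move=> z zz; have := comp_letters (c := a.+1) (f := Ls i) (a := a.+1) (g := [:: x]).
        move=> /(_ _ _ _ z zz); apply; [by move=> y; rewrite inE => /eqP ->; lia | lia | lia].
- move=> i j; rewrite !ltnS => ils jls.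
  case: (ltnP i s) => [ilt | ige]; case: (ltnP j s) => [jlt | jge].
  + exact: inj.
  + move=> E; exfalso; move/negP: nex; apply; apply/existsP; exists (Ordinal ilt); by rewrite /= E.
  + move=> E; exfalso; move/negP: nex; apply; apply/existsP; exists (Ordinal jlt); by rewrite /= -E.
  + move=> _; lia.
Qed.

Lemma HJ_step a : 0 < a -> HJ a -> HJ a.+1.
Proof.
move=> a0 hj T.
have : forall s, exists N, Foc a T N s.
  elim=> [|s IH]; first by exists 0; exact: foc0.
  exact: foc_step.
move=> /(_ #|T|.+1) [N foc]; exists N => chi.
have [[L [PL HL]] | [f [Ls [cs [sf lf HLs inj]]]]] := foc chi.
  exists L; split => // x xa; rewrite HL ?HL //; lia.
exfalso.
pose g (i : 'I_#|T|.+1) := cs i.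
have gi : injective g by move=> i j /inj E; apply: val_inj; apply: E.
have := leq_card g gi; rewrite card_ord; lia.
Qed.

Lemma HJ_all a : 0 < a -> HJ a.
Proof.
elim: a => // a IH _; case: a IH => [|a] IH; first exact: HJ1.
apply: HJ_step => //; exact: IH.
Qed.

Definition GR k := forall (a m : nat) (T : finType), exists n, forall chi : seq nat -> T,
  exists F, PW a n m F /\ forall g g', PW a m k g -> PW a m k g' ->
    chi (pcomp a F g) = chi (pcomp a F g').

Lemma index_iota_add a M j : j < M -> index (a + j) (iota a M) = j.
Proof.
move=> jM; apply: index_charP; first by rewrite size_iota.
  by rewrite nth_iota.
move=> i ij; rewrite nth_iota; [apply/eqP; lia | lia].
Qed.

Lemma PW_iota a M : PW a M M (iota a M).
Proof.
split.
- by rewrite size_iota.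
- by move=> z; rewrite mem_iota => /andP []. 
- by move=> j jM; rewrite mem_iota; lia.
- move=> j j' jj jM; rewrite !index_iota_add //; lia.
Qed.

Lemma comp_eq_prefix a L f y y' : {in f, forall x, x < a + L} ->
  (forall i, i < L -> nth 0 y i = nth 0 y' i) -> pcomp a f y = pcomp a f y'.
Proof.
move=> Hf Hy; apply/eq_in_map => z zf; case: ifP => // za.
apply: Hy; have := Hf _ zf; lia.
Qed.

Lemma PW0_nil m g : PW 0 m 0 g -> g = [::].
Proof. case: g => // x g [_ l _ _]; have := l x (mem_head _ _); lia. Qed.

Definition shiftw a m (L : seq nat) := map (fun z => if z < a then z else z + m) L.

Lemma GR0 : GR 0.
Proof.
move=> a; case: (posnP a) => [-> | a0].
  move=> m T; exists m => chi; exists (iota 0 m); split; first exact: PW_iota.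
  by move=> g g' /PW0_nil -> /PW0_nil ->.
elim=> [|m IH] T.
  exists 0 => chi; exists [::]; split.
    by split => //; lia.
  by move=> g g' [sg _ _ _] [sg' _ _ _]; case: g sg; case: g' sg'.
have [N2 hjN] := HJ_all a0 T.
pose T' := {ffun {ffun 'I_N2 -> 'I_a.+1} -> T}.
have [N1 IHN] := IH T'.
exists (N1 + N2) => chi.
pose chi' (x : seq nat) : T' := [ffun f => chi (x ++ fromF f)].
have [F' [PF' HF']] := IHN chi'.
have [sF' lF' oF' ordF'] := PF'.
pose u0 := nseq m 0.
have Pu0 : PW a m 0 u0.
  split; [by rewrite size_nseq | move=> z; rewrite mem_nseq => /andP [_ /eqP ->]; lia | lia | lia].
pose chi'' y := chi (pcomp a F' u0 ++ y).
have [L [PL HL]] := hjN chi''.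
have [sL lL oL _] := PL.
exists (F' ++ shiftw a m L); split.
  split.
  - by rewrite size_cat size_map sF' sL.
  - move=> z; rewrite mem_cat => /orP [/lF' | /mapP [y yL ->]]; first lia.
    have := lL _ yL; case: ifP; lia.
  - move=> j; rewrite ltnS leq_eqVlt => /orP [/eqP -> | jm]; rewrite mem_cat.
      apply/orP; right; apply/mapP; exists a; first by have := oL 0 isT; rewrite addn0.
      by rewrite ltnn.
    by rewrite oF'.
  - move=> j j' jj; rewrite ltnS leq_eqVlt => /orP [/eqP E | jm]; first subst j'.
      have jm : j < m by lia.
      have nin : (a + m \in F') = false by apply/negP => /lF'; lia.
      rewrite !index_cat (oF' j jm) nin.
      have : index (a + j) F' < size F' by rewrite index_mem oF'.
      exact: ltn_addr.
    by rewrite !index_cat !oF' //; [apply: ordF' | lia].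
have key : forall g, PW a m.+1 0 g -> chi (pcomp a (F' ++ shiftw a m L) g) = chi'' (pcomp a L [:: 0]).
  move=> g [sg lg _ _].
  have Pu : PW a m 0 (take m g).
    split; [by rewrite size_take sg ltnSn | move=> z /mem_take /lg; lia | lia | lia].
  have E1 : pcomp a F' g = pcomp a F' (take m g).
    by apply: (comp_eq_prefix (L := m)) => // i im; rewrite nth_take.
  have E2 : pcomp a (shiftw a m L) g = pcomp a L [:: nth 0 g m].
    rewrite /pcomp /shiftw -map_comp; apply/eq_in_map => z zL /=.
    case za: (z < a); first by rewrite za.
    have -> : z = a by have := lL _ zL; lia.
    by rewrite ltnNge leq_addr /= addKn subnn.
  have xa : nth 0 g m < a by rewrite -[a]addn0; apply: lg; apply: mem_nth; rewrite sg.
  rewrite comp_cat E1 E2 -(HL _ xa) /chi''.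
  have := congr1 (fun F : T' => F (toF N2 a (pcomp a L [:: nth 0 g m]))) (HF' _ _ Pu Pu0).
  rewrite /chi' !ffunE fromF_toF //; first by rewrite size_map.
  move=> z zz; apply: ltnW; move: z zz; apply: comp_letters => //; by move=> y; rewrite inE => /eqP ->.
by move=> g g' Pg Pg'; rewrite !key.
Qed.

Lemma prefix_letters a n k w j : PW a n k w -> j < k ->
  {in take (index (a + j) w) w, forall x, x < a + j}.
Proof.
move=> [sw lw ow ordw] jk x /(nthP 0) [i]; rewrite size_takel ?index_size // => ii.
have iw : index (a + j) w < size w by rewrite index_mem ow.
rewrite nth_take // => E.
have xw : x \in w by rewrite -E mem_nth //; apply: ltn_trans iw.
have xk := lw _ xw; rewrite ltnNge; apply/negP => xl.
move: (nth_before_index ii); rewrite E => ne.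
have xe : x = a + (x - a) by lia.
case: (ltngtP j (x - a)) => jx.
- have := ordw _ _ jx ltac:(lia).
  have : index x w <= i by apply: index_leP => //; apply: ltn_trans iw.
  rewrite -xe; lia.
- lia.
- by move: ne; rewrite {1}xe -jx eqxx.
Qed.

Definition Inv k a (T : finType) (chi : seq nat -> T) F M t : Prop :=
  forall g g', PW a M k.+1 g -> PW a M k.+1 g' -> index a g < t ->
    take (index a g) g = take (index a g') g' -> chi (pcomp a F g) = chi (pcomp a F g').

Lemma take_index_eq (a : nat) g g' : take (index a g) g = take (index a g') g' -> index a g = index a g'.
Proof. by move=> /(congr1 size); rewrite !size_takel // index_size. Qed.

Lemma comp_iota a n g : n <= size g -> pcomp a (iota a n) g = take n g.
Proof.
move=> ng; apply: (@eq_from_nth _ 0).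
  by rewrite size_map size_iota size_takel.
move=> i; rewrite size_map size_iota => ii.
rewrite (nth_map 0) ?size_iota // nth_iota // nth_take //.
by rewrite ltnNge leq_addr /= addKn.
Qed.

Definition hw a p H := iota a p.+1 ++ H.

Lemma index_hw a p H j : j <= p -> index (a + j) (hw a p H) = j.
Proof.
move=> jp; rewrite /hw index_cat mem_iota ifT; last by lia.
by rewrite index_iota_add.
Qed.

Lemma PW_hw a p N M' H : p < M' -> PW (a + p.+1) N (M' - p.+1) H -> PW a (p.+1 + N) M' (hw a p H).
Proof.
move=> pM [sH lH oH ordH].
have oH' : forall j, p < j -> j < M' -> a + j \in H.
  by move=> j pj jM; have := oH (j - p.+1) ltac:(lia); rewrite -addnA subnKC.
have idxH : forall j, p < j -> j < M' -> index (a + j) (hw a p H) = p.+1 + index (a + j) H.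
  move=> j pj jM; rewrite /hw index_cat mem_iota ifF; last by lia.
  by rewrite size_iota.
split.
- by rewrite size_cat size_iota sH.
- move=> z; rewrite mem_cat mem_iota => /orP [|/lH]; lia.
- move=> j jM; rewrite mem_cat; case: (leqP j p) => jp.
    by rewrite mem_iota; apply/orP; left; lia.
  by rewrite oH' ?orbT.
- move=> j j' jj jM; case: (leqP j' p) => j'p.
    rewrite !index_hw //; lia.
  rewrite (idxH j') //.
  case: (leqP j p) => jp.
    rewrite index_hw //; lia.
  rewrite idxH //; last by lia. rewrite ltn_add2l.
  have := ordH (j - p.+1) (j' - p.+1) ltac:(lia) ltac:(lia).
  by rewrite -!addnA !subnKC.
Qed.

Definition liftf a p x := if x < a then x else x + p.
Definition sigma a p (u : seq nat) x := if x < a then x else if x < a + p then nth 0 u (x - a) else x - p.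
Definition liftv a p g := map (liftf a p) (drop p.+1 g).

Lemma index_drop (x : nat) s n : n <= index x s -> index x (drop n s) = index x s - n.
Proof.
elim: n s => [|n IH] [|y s] //=; first by rewrite subn0.
case: ifP => // _ H; rewrite IH //.
Qed.

Lemma PW_liftv a M' k g : PW a M' k.+1 g -> PW (a + (index a g).+1) (M' - (index a g).+1) k (liftv a (index a g) g).
Proof.
move=> Pg; have [sg lg og ordg] := Pg; set p := index a g.
have pM : p < M' by rewrite -sg index_mem -[a]addn0 og.
have linj : injective (liftf a p).
  move=> x y; rewrite /liftf; case: ifP; case: ifP; lia.
have big : forall j, j < k -> p < index (a + j.+1) g.
  by move=> j jk; have := ordg 0 j.+1 isT ltac:(lia); rewrite addn0.
have idx : forall j, j < k -> index (a + (p.+1) + j) (liftv a p g) = index (a + j.+1) g - p.+1.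
  move=> j jk.
  have -> : a + p.+1 + j = liftf a p (a + j.+1) by rewrite /liftf ifF; lia.
  by rewrite /liftv index_map // index_drop //; apply: big.
split.
- by rewrite size_map size_drop sg.
- move=> z /mapP [y /mem_drop yg ->]; have := lg _ yg; rewrite /liftf; case: ifP; lia.
- move=> j jk; rewrite -index_mem idx // size_map size_drop.
  have : index (a + j.+1) g < size g by rewrite index_mem og.
  have := big j jk; lia.
- move=> j j' jj jk; rewrite !idx //; last by lia.
  have := ordg j.+1 j'.+1 ltac:(lia) ltac:(lia).
  have := big j ltac:(lia); lia.
Qed.

Lemma comp_hw a M' k p N H g : PW a M' k.+1 g -> index a g = p -> PW (a + p.+1) N (M' - p.+1) H ->
  pcomp a (hw a p H) g = take p g ++ a :: map (sigma a p (take p g)) (pcomp (a + p.+1) H (liftv a p g)).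
Proof.
move=> Pg ip PH; have [sg lg og ordg] := Pg; have [sH lH oH ordH] := PH.
have pM : p < M' by rewrite -sg -ip index_mem -[a]addn0 og.
rewrite /hw comp_cat comp_iota; last by rewrite sg.
rewrite (take_nth 0); last by rewrite sg.
have -> : nth 0 g p = a by rewrite -ip nth_index // -[a]addn0 og.
rewrite -cats1 -catA /=; congr (_ ++ _ :: _).
rewrite /pcomp -map_comp; apply/eq_in_map => x xH /=.
have xb := lH _ xH.
rewrite /sigma; case: (ltnP x a) => xa; first by rewrite (ltn_addr _ xa) xa.
case: (ltnP x (a + p)) => xap.
  have xap1 : x < a + p.+1 by lia.
  rewrite xap1 ltnNge xa /= xap nth_take //; lia.
case: (ltnP x (a + p.+1)) => xap1.
  have -> : x = a + p by lia.
  have ga : nth 0 g p = a by rewrite -ip nth_index // -[a]addn0 og.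
  by rewrite addKn ga ltnn ltnNge leq_addr /= addnK.
have il : x - (a + p.+1) < size (drop p.+1 g).
  rewrite size_drop sg; lia.
rewrite (nth_map 0) // nth_drop /liftf.
have -> : p.+1 + (x - (a + p.+1)) = x - a by lia.
set y := nth 0 g (x - a).
case: (ltnP y a) => ya; first by rewrite ya.
rewrite ltnNge (leq_trans ya (leq_addr _ _)) /= ltnNge leq_add2r ya /=.
by rewrite addnK.
Qed.

Lemma stage1_step k (IH : GR k) a (T : finType) p M' : p < M' ->
  exists M, p < M /\ forall (chi : seq nat -> T) n F, PW a n M F -> Inv k a chi F M p ->
    exists F', PW a n M' F' /\ Inv k a chi F' M' p.+1.
Proof.
move=> pM.
pose U := {ffun 'I_p -> 'I_a.+1}.
pose T' := {ffun U -> T}.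
have [N HN] := IH (a + p.+1) (M' - p.+1) T'.
exists (p.+1 + N); split; first lia.
move=> chi n F PF HI.
pose psi (w : seq nat) : T' :=
  [ffun f : U => chi (pcomp a F (fromF f ++ a :: map (sigma a p (fromF f)) w))].
have [H [PH HH]] := HN psi.
have Ph := PW_hw pM PH.
exists (pcomp a F (hw a p H)); split; first exact: comp_PW PF Ph.
have [sF lF _ _] := PF.
have Fl : {in F, forall x, x < a + size (hw a p H)} by rewrite (PW_size Ph).
have idx_g : forall g, PW a M' k.+1 g -> index a g <= p ->
    index a (pcomp a (hw a p H) g) = index a g.
  move=> g0 Pg0 le; have := comp_index Ph Pg0 (j := 0) isT.
  by rewrite !addn0 => ->; rewrite index_hw.
have take_g : forall g q, PW a M' k.+1 g -> q <= p ->
    take q (pcomp a (hw a p H) g) = take q g.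
  move=> g0 q Pg0 qp; have [sg0 _ _ _] := Pg0.
  rewrite /hw comp_cat comp_iota; last by rewrite sg0.
  rewrite take_cat size_takel; last by rewrite sg0.
  rewrite ifT ?ltnS // take_takel //; lia.
move=> g g' Pg Pg' ilt E.
have ie := take_index_eq E.
rewrite !comp_assoc //.
case: (ltngtP (index a g) p) => ip.
- apply: HI.
  + exact: comp_PW Ph Pg.
  + exact: comp_PW Ph Pg'.
  + by rewrite idx_g //; lia.
  + by rewrite !idx_g ?take_g //; lia.
- lia.
- have ip' : index a g' = p by rewrite -ie.
  rewrite (comp_hw Pg ip PH) (comp_hw Pg' ip' PH).
  have u' : take p g' = take p g by rewrite -ip E ie.
  rewrite u'.
  have Pl := PW_liftv Pg; have Pl' := PW_liftv Pg'.
  rewrite ip in Pl; rewrite ip' in Pl'.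
  have uF : fromF (toF p a (take p g)) = take p g.
    apply: fromF_toF; first by rewrite size_takel // (PW_size Pg); lia.
    move=> z; rewrite -ip => zz; have := prefix_letters Pg (j := 0) isT.
    rewrite addn0 => /(_ z zz); lia.
  have := congr1 (fun F : T' => F (toF p a (take p g))) (HH _ _ Pl Pl').
  by rewrite !ffunE uF.
Qed.

Lemma stage1 k (IH : GR k) a (T : finType) P M' : P <= M' ->
  exists M, forall (chi : seq nat -> T) n F, PW a n M F ->
    exists F', PW a n M' F' /\ Inv k a chi F' M' P.
Proof.
elim: P M' => [|P IHP] M' PM.
  exists M' => chi n F PF; exists F; split => // g g' _ _; lia.
have [M1 [PM1 step]] := stage1_step IH a T PM.
have [M IHM] := IHP M1 (ltnW PM1).
exists M => chi n F PF.
have [F1 [PF1 I1]] := IHM chi n F PF.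
have [F2 [PF2 I2]] := step chi n F1 PF1 I1.
by exists F2.
Qed.

Lemma PW_snoc a n m w : PW a n m w -> PW a n.+1 m.+1 (w ++ [:: a + m]).
Proof.
move=> [sw lw ow ordw].
have nin : a + m \notin w by apply/negP => /lw; lia.
split.
- by rewrite size_cat sw addn1.
- move=> z; rewrite mem_cat => /orP [/lw|]; [lia | rewrite inE => /eqP ->; lia].
- move=> j; rewrite ltnS leq_eqVlt mem_cat => /orP [/eqP -> | jm].
    by rewrite inE eqxx orbT.
  by rewrite ow.
- move=> j j' jj; rewrite ltnS leq_eqVlt => /orP [/eqP E | jm].
    subst j'; rewrite !index_cat (negbTE nin) ow; last by lia.
    rewrite /= eqxx addn0 index_mem ow //; lia.
  by rewrite !index_cat !ow //; [apply: ordw | lia].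
Qed.

Definition Claim a (T : finType) m2 := exists M, forall col : seq nat -> T, exists F, PW a M m2 F /\
  forall p u, p < m2 -> size u = p -> {in u, forall x, x < a} ->
    col (pcomp a (take (index (a + p) F) F) u) = col (pcomp a (take (index (a + p) F) F) (nseq p 0)).

Lemma claim_all a (T : finType) m2 : 0 < a -> Claim a T m2.
Proof.
move=> a0; elim: m2 => [|m2 [Mm IH]].
  exists 0 => col; exists [::]; split; last by lia.
  split => //; lia.
have [M2 HE] := GR0 a Mm T.
exists M2.+1 => col.
have [E [PE HEc]] := HE col.
pose col' (s : seq nat) := col (pcomp a (take (index (a + size s) E) E) s).
have [F2 [PF2 HF2]] := IH col'.
have [sE lE oE ordE] := PE; have [sF2 lF2 oF2 ordF2] := PF2.
have PEF := comp_PW PE PF2.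
exists (pcomp a E F2 ++ [:: a + m2]); split; first exact: PW_snoc PEF.
have key : forall p u, p < m2 -> col (pcomp a (take (index (a + p) (pcomp a E F2 ++ [:: a + m2]))
                  (pcomp a E F2 ++ [:: a + m2])) u)
      = col' (pcomp a (take (index (a + p) F2) F2) u).
  move=> p u pm.
  have pin : a + p \in pcomp a E F2 by have [_ _ o _] := PEF; apply: o.
  set q2 := index (a + p) F2.
  have q2m : q2 < Mm by rewrite -sF2 index_mem oF2.
  set Q := index (a + q2) E.
  have E1 : take (index (a + p) (pcomp a E F2 ++ [:: a + m2])) (pcomp a E F2 ++ [:: a + m2])
            = pcomp a (take Q E) F2.
    rewrite index_cat pin (comp_index PE PF2) // takel_cat; last first.
      by rewrite size_map index_size.
    by rewrite /pcomp map_take.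
  have tk : pcomp a (take q2 F2) u = take q2 (pcomp a F2 u) by rewrite /pcomp map_take.
  rewrite E1 comp_assoc; last by move=> z /mem_take /lE; rewrite sF2.
  rewrite /col' size_map size_takel ?index_size // -/q2.
  congr col; apply: (comp_eq_prefix (L := q2)).
    exact: prefix_letters PE q2m.
  move=> i iq; rewrite tk nth_take //.
move=> p u; rewrite ltnS leq_eqVlt => /orP [/eqP pe | pm] su lu; last first.
  by rewrite !key // HF2 //; rewrite size_nseq.
subst p.
have [sEF lEF _ _] := PEF.
have nin : a + m2 \notin pcomp a E F2 by apply/negP => /lEF; lia.
have E1 : take (index (a + m2) (pcomp a E F2 ++ [:: a + m2])) (pcomp a E F2 ++ [:: a + m2]) = pcomp a E F2.
  by rewrite index_cat (negbTE nin) /= eqxx addn0 take_size_cat.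
have El : {in E, forall x, x < a + size F2} by rewrite sF2.
rewrite E1 !comp_assoc //.
have Pu : forall v, size v = m2 -> {in v, forall x, x < a} -> PW a Mm 0 (pcomp a F2 v).
  move=> v sv lv; apply: (comp_PW PF2); split; [done | by move=> z /lv; lia | lia | lia].
apply: HEc; apply: Pu => //; first by rewrite size_nseq.
by move=> z; rewrite mem_nseq => /andP [_ /eqP ->].
Qed.


Lemma find_charP (P : pred nat) s n : n <= size s -> (forall t, t < n -> ~~ P (nth 0 s t)) ->
  (n < size s -> P (nth 0 s n)) -> find P s = n.
Proof.
elim: s n => [|y s IH] [|n] //=.
- by move=> _ _ /(_ isT) ->.
- move=> ns Hb Hn; have := Hb 0 isT => /= /negbTE ->.
  congr S; apply: IH => // t tn; exact: (Hb t.+1).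
Qed.

Lemma find_leP (P : pred nat) s t : t < size s -> P (nth 0 s t) -> find P s <= t.
Proof.
move=> ts Pt; rewrite leqNgt; apply/negP => H.
by have := before_find 0 H; rewrite Pt.
Qed.

Lemma sorted_nth_lt s t t' : sorted ltn s -> t < t' -> t' < size s -> nth 0 s t < nth 0 s t'.
Proof.
move=> ss tt ts; apply: (sorted_ltn_nth ltn_trans 0 ss) => //; rewrite inE; lia.
Qed.

Lemma sorted_nth_le s t t' : sorted ltn s -> t <= t' -> t' < size s -> nth 0 s t <= nth 0 s t'.
Proof.
move=> ss; rewrite leq_eqVlt => /orP [/eqP -> // | tt] ts.
by apply: ltnW; apply: sorted_nth_lt.
Qed.

Definition sel a (s : seq nat) L :=
  mkseq (fun j => if j < head 0 s then 0 else a + (find (fun x => j < x) s).-1) L.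

Lemma index_sel a s L i : 0 < a -> sorted ltn s -> {in s, forall x, x < L} -> i < size s ->
  index (a + i) (sel a s L) = nth 0 s i.
Proof.
move=> a0 ss sL iS.
have s0 : 0 < size s by lia.
have hd : head 0 s = nth 0 s 0 by case: s ss sL iS s0.
have siL : nth 0 s i < L by apply: sL; apply: mem_nth.
apply: index_charP; first by rewrite size_mkseq.
- rewrite nth_mkseq // hd ltnNge sorted_nth_le //=.
  rewrite (@find_charP _ _ i.+1) //.
  + by move=> t ti; rewrite -leqNgt sorted_nth_le //; lia.
  + by move=> ins; apply: sorted_nth_lt.
- move=> j ji; rewrite nth_mkseq; last by lia.
  rewrite hd; case: ifP => j0; first by apply/eqP; lia.
  have : find (fun x => j < x) s <= i by apply: find_leP.
  case: i ji iS {siL} => [|i] ji iS.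
    move: j0; rewrite ji //.
  move=> fi; apply/eqP; lia.
Qed.

Lemma PW_sel a s L : 0 < a -> sorted ltn s -> {in s, forall x, x < L} -> 0 < size s ->
  PW a L (size s) (sel a s L).
Proof.
move=> a0 ss sL s0.
have idx := index_sel a0 ss sL.
split.
- by rewrite size_mkseq.
- move=> z /mapP [j _ ->]; case: ifP => _; first lia.
  have := find_size (fun x => j < x) s; lia.
- move=> j js; rewrite -index_mem idx // size_mkseq; apply: sL; exact: mem_nth.
- move=> j j' jj js; rewrite !idx //; first exact: sorted_nth_lt.
  lia.
Qed.

Lemma sum_count (T : finType) (kappa : nat -> T) s :
  \sum_(c : T) count (fun p => kappa p == c) s = size s.
Proof.
elim: s => [|x s IH] /=; first by rewrite big1.
rewrite big_split /= IH (bigD1 (kappa x)) //= eqxx big1 // => c cx.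
by rewrite eq_sym (negbTE cx).
Qed.

Lemma pigeon (T : finType) (kappa : nat -> T) m n : #|T| * m <= n -> 0 < #|T| ->
  exists c, m <= count (fun p => kappa p == c) (iota 0 n).
Proof.
move=> Tn T0.
case: (boolP [exists c : T, m <= count (fun p => kappa p == c) (iota 0 n)]).
  by move=> /existsP [c Hc]; exists c.
move=> /existsPn H; exfalso.
case: m Tn H => [|m] Tn H.
  by have := H (enum_val (Ordinal T0)).
have : \sum_(c : T) count (fun p => kappa p == c) (iota 0 n) <= \sum_(c : T) m.
  by apply: leq_sum => c _; have := H c; rewrite -ltnNge ltnS.
rewrite sum_count size_iota sum_nat_const => H2.
have : #|T| * m.+1 <= #|T| * m by apply: leq_trans Tn H2.
rewrite leq_pmul2l //; lia.
Qed.

Lemma idx0 k n w : PW 0 n k.+1 w -> index 0 w = 0.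
Proof.
case: w => [|x w] [_ lw ow ordw]; first by have := ow 0 isT.
rewrite /= ; case: eqP => // /eqP x0.
have xk : x < k.+1 by have := lw x (mem_head _ _).
have := ordw 0 x ltac:(lia) xk; rewrite /= add0n eqxx; lia.
Qed.

Lemma stage2 a k m (T : finType) : exists M, forall col : seq nat -> T, exists G, PW a M m G /\
  forall g g', PW a m k.+1 g -> PW a m k.+1 g' ->
    col (take (index a (pcomp a G g)) (pcomp a G g)) = col (take (index a (pcomp a G g')) (pcomp a G g')).
Proof.
case: m => [|m].
  exists 0 => col; exists [::]; split; first by split => //; lia.
  by move=> g g' [sg _ og _]; have := og 0 isT; move: sg; case: g {og}.
case: (posnP a) => [-> | a0].
  exists m.+1 => col; exists (iota 0 m.+1); split; first exact: PW_iota.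
  move=> g g' Pg Pg'.
  by rewrite (idx0 (comp_PW (PW_iota 0 m.+1) Pg)) (idx0 (comp_PW (PW_iota 0 m.+1) Pg')) !take0.
pose m2 := #|T| * m.+1.
have [M HC] := claim_all T m2 a0.
exists M => col.
have [F [PF HF]] := HC col.
have T0 : 0 < #|T| by apply/card_gt0P; exists (col [::]).
pose kappa p := col (pcomp a (take (index (a + p) F) F) (nseq p 0)).
have [c Hc] := pigeon kappa (leqnn m2) T0.
pose s := take m.+1 [seq p <- iota 0 m2 | kappa p == c].
have ss : sorted ltn s.
  by apply: take_sorted; apply: (sorted_filter ltn_trans); apply: iota_ltn_sorted.
have sz : size s = m.+1 by rewrite size_takel // size_filter.
have sin : forall x, x \in s -> x < m2 /\ kappa x = c.
  move=> x /mem_take; rewrite mem_filter mem_iota => /andP [/eqP kx /andP [_ xm]].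
  by split => //; lia.
have Ph : PW a m2 m.+1 (sel a s m2).
  have := PW_sel a0 ss (L := m2) (fun x xs => proj1 (sin x xs)) ltac:(by rewrite sz). by rewrite sz.
have [sF lF _ _] := PF.
exists (pcomp a F (sel a s m2)); split; first exact: comp_PW PF Ph.
suff K : forall g, PW a m.+1 k.+1 g ->
    col (take (index a (pcomp a (pcomp a F (sel a s m2)) g)) (pcomp a (pcomp a F (sel a s m2)) g)) = c.
  by move=> g g' Pg Pg'; rewrite !K.
move=> g Pg.
have Fl : {in F, forall x, x < a + size (sel a s m2)} by rewrite size_mkseq.
rewrite comp_assoc //.
set y := pcomp a (sel a s m2) g.
have Py : PW a m2 k.+1 y := comp_PW Ph Pg.
have [sg lg og _] := Pg.
set i := index a g.
have im : i < m.+1 by rewrite -sg index_mem -[a]addn0 og.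
have iy : index a y = nth 0 s i.
  have := comp_index Ph Pg (j := 0) isT; rewrite !addn0 => ->.
  by rewrite index_sel // ?sz // => x /sin [].
set si := nth 0 s i.
have [sim ksi] : si < m2 /\ kappa si = c by apply: sin; apply: mem_nth; rewrite sz.
have iFy : index a (pcomp a F y) = index (a + si) F.
  by have := comp_index PF Py (j := 0) isT; rewrite !addn0 => ->; rewrite iy.
rewrite iFy /pcomp -map_take -/(pcomp a (take (index (a + si) F) F) y).
rewrite (@comp_eq_prefix a si _ y (take si y)); first last.
- by move=> t ts; rewrite nth_take.
- exact: prefix_letters PF sim.
rewrite -ksi /kappa; apply: HF => //.
- by rewrite size_takel // (PW_size Py); lia.
- have := prefix_letters Py (j := 0) isT; rewrite !addn0 iy //.
Qed.

Lemma GR_step k : GR k -> GR k.+1.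
Proof.
move=> IH a m T.
have [M2 H2] := stage2 a k m T.
have [M1 H1] := stage1 IH a T (leqnn M2).
exists M1 => chi.
have [F1 [PF1 I1]] := H1 chi M1 (iota a M1) (PW_iota a M1).
pose col (s : seq nat) := chi (pcomp a F1 (epsilon (inhabits [::])
        (fun g => PW a M2 k.+1 g /\ take (index a g) g = s))).
have Hcol : forall g, PW a M2 k.+1 g -> chi (pcomp a F1 g) = col (take (index a g) g).
  move=> g Pg; rewrite /col.
  have [P0 E0] := epsilon_spec (inhabits [::])
        (fun g0 => PW a M2 k.+1 g0 /\ take (index a g0) g0 = take (index a g) g)
        (ex_intro _ g (conj Pg erefl)).
  apply: I1 => //.
  by have [sg _ og _] := Pg; rewrite -sg index_mem -[a]addn0 og.
have [G [PG HG]] := H2 col.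
have [sF lF _ _] := PF1.
exists (pcomp a F1 G); split; first exact: comp_PW PF1 PG.
move=> g g' Pg Pg'.
have Fl : {in F1, forall x, x < a + size G} by rewrite (PW_size PG).
rewrite !comp_assoc // !Hcol; [exact: HG | exact: comp_PW PG Pg' | exact: comp_PW PG Pg].
Qed.

Lemma GR_all k : GR k.
Proof. elim: k => [|k IH]; [exact: GR0 | exact: GR_step]. Qed.

Definition mat n k (w : seq nat) : 'M[nat]_(n, k) := \matrix_(i < n, j < k) ((nth 0 w i == j) : nat).

Lemma matE n k w i j : mat n k w i j = (nth 0 w i == j).
Proof. by rewrite mxE. Qed.

Lemma bigmin_le (I : eqType) (r : seq I) (P : pred I) (F : I -> nat) x z :
  z \in r -> P z -> \big[minn/x]_(i <- r | P i) F i <= F z.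
Proof.
elim: r => // i r IH; rewrite inE big_cons => /orP [/eqP <- | zr] Pz.
  by rewrite Pz geq_minl.
case: ifP => _; last exact: IH.
exact: leq_trans (geq_minr _ _) (IH zr Pz).
Qed.

Lemma minrow_mat n k w (j : 'I_k) : size w = n -> (j : nat) \in w ->
  minrow (mat n k w) j = index (j : nat) w.
Proof.
move=> sw jw; rewrite /minrow.
have qn : index (j : nat) w < n by rewrite -sw index_mem.
apply/eqP; rewrite eqn_leq; apply/andP; split.
  apply: (@bigmin_le _ _ _ (fun i : 'I_n => i : nat) _ (Ordinal qn)).
    exact: mem_index_enum.
  by rewrite matE nth_index // eqxx.
apply: (big_ind (fun x => index (j : nat) w <= x)) => //.
- exact: ltnW.
- by move=> x y hx hy; rewrite leq_min hx hy.
- move=> i Hi; apply: index_leP; first by rewrite sw.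
  by move: Hi; rewrite matE; case: (nth 0 w i =P j).
Qed.

Lemma PW_oba n k w : PW 0 n k w -> is_oba (mat n k w).
Proof.
case=> sw lw ow ordw.
apply/andP; split.
  apply/andP; split; first (apply/andP; split).
  - by apply/forallP => i; apply/forallP => j; rewrite matE; case: (_ == _).
  - apply/forallP => i.
    have wi : nth 0 w i < k by rewrite -[k]add0n; apply: lw; apply: mem_nth; rewrite sw.
    have -> : [set j : 'I_k | mat n k w i j == 1] = [set Ordinal wi].
      apply/setP => j; rewrite !inE matE -val_eqE /= eq_sym.
      have := @eq_sym _ (nth 0 w i) (j : nat); by case: (nth 0 w i == j); case: (_ == _).
    by rewrite cards1.
  - apply/forallP => j.
    have jw : (j : nat) \in w by rewrite -[nat_of_ord j]add0n; apply: ow.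
    have qn : index (j : nat) w < n by rewrite -sw index_mem.
    by apply/existsP; exists (Ordinal qn); rewrite matE nth_index // eqxx.
apply/forallP => j; apply/forallP => j'; apply/implyP => /eqP jj.
have inw : forall t : 'I_k, (t : nat) \in w by move=> t; rewrite -[nat_of_ord t]add0n; apply: ow.
rewrite !minrow_mat //.
have := ordw j j' ltac:(lia) (ltn_ord j'); rewrite !add0n //.
Qed.

Lemma mat_mul n m k f g : size f = n -> {in f, forall x, x < m} ->
  (mat n m f *m mat m k g)%R = mat n k (pcomp 0 f g).
Proof.
move=> sf lf; apply/matrixP => i j; rewrite !mxE.
have fi : nth 0 f i < m by apply: lf; apply: mem_nth; rewrite sf.
rewrite (bigD1 (Ordinal fi)) //= big1.
  rewrite GRing.addr0 !matE /= eqxx GRing.mul1r /pcomp (nth_map 0); last by rewrite sf.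
  by rewrite ltn0 subn0.
move=> l ln; rewrite !matE.
have -> : (nth 0 f i == l) = false.
  by apply/negP => /eqP E; move/eqP: ln; apply; apply: val_inj; rewrite /= E.
by rewrite GRing.mul0r.
Qed.

Definition wordof n k (A : 'M[nat]_(n, k)) : seq nat :=
  [seq oapp (@nat_of_ord k) 0 [pick j : 'I_k | A i j == 1%N] | i <- enum 'I_n].

Lemma nth_wordof n k (A : 'M[nat]_(n, k)) (i : 'I_n) :
  nth 0 (wordof A) i = oapp (@nat_of_ord k) 0 [pick j : 'I_k | A i j == 1%N].
Proof. by rewrite (nth_map i) ?size_enum_ord // nth_ord_enum. Qed.

Lemma size_wordof n k (A : 'M[nat]_(n, k)) : size (wordof A) = n.
Proof. by rewrite size_map size_enum_ord. Qed.

Lemma ba_row n k (A : 'M[nat]_(n, k)) : is_ba A -> forall i : 'I_n,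
  exists j0 : 'I_k, nth 0 (wordof A) i = j0 /\ forall j, A i j = (j0 == j).
Proof.
move=> /andP [/andP [/forallP le1 /forallP card1] _] i.
rewrite nth_wordof; case: pickP => [j0 Hj0 | none]; last first.
  have := card1 i; rewrite (_ : [set j | A i j == 1%N] = set0) ?cards0 //.
  by apply/setP => j; rewrite !inE none.
exists j0; split => // j.
case: (eqVneq j0 j) => [<- | ne]; first by rewrite (eqP Hj0).
have : A i j <= 1 by have := le1 i => /forallP; apply.
rewrite leq_eqVlt => /orP [/eqP E | ]; last by rewrite ltnS leqn0 => /eqP ->.
have := card1 i => /eqP C.
have : #|[set j0; j]| <= #|[set j' | A i j' == 1%N]|.
  by apply: subset_leq_card; apply/subsetP => x; rewrite !inE => /orP [] /eqP ->; rewrite ?Hj0 ?E.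
by rewrite C cards2 ne.
Qed.

Lemma ba_mat n k (A : 'M[nat]_(n, k)) : is_ba A -> A = mat n k (wordof A).
Proof.
move=> H; apply/matrixP => i j; have [j0 [E1 E2]] := ba_row H i.
by rewrite matE E1 E2.
Qed.

Lemma ba_letters n k (A : 'M[nat]_(n, k)) : is_ba A -> {in wordof A, forall x, x < k}.
Proof.
move=> H x /(nthP 0) [i]; rewrite size_wordof => iN <-.
by have [j0 [-> _]] := ba_row H (Ordinal iN).
Qed.

Lemma ba_occ n k (A : 'M[nat]_(n, k)) : is_ba A -> forall j : 'I_k, (j : nat) \in wordof A.
Proof.
move=> H j; have /andP [_ /forallP col] := H.
have /existsP [i Hi] := col j.
have [j0 [E1 E2]] := ba_row H i.
move: Hi; rewrite E2; case: (eqVneq j0 j) => [E _ | //].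
by rewrite -E -E1 mem_nth // size_wordof.
Qed.

Lemma consec_lt (f : nat -> nat) k : (forall t, t.+1 < k -> f t < f t.+1) ->
  forall j j', j < j' -> j' < k -> f j < f j'.
Proof.
move=> H j; elim=> // j' IH jj jk.
case: (eqVneq j j') => [E | ne]; first by subst j'; apply: H.
apply: (ltn_trans (IH _ _) (H _ jk)); lia.
Qed.

Lemma oba_PW n k (A : 'M[nat]_(n, k)) : is_oba A -> PW 0 n k (wordof A).
Proof.
move=> /andP [H /forallP ord].
split.
- exact: size_wordof.
- by move=> x /(ba_letters H).
- by move=> j jk; rewrite add0n (ba_occ H (Ordinal jk)).
- move=> j j'; rewrite !add0n; apply: (consec_lt (f := fun t => index t (wordof A))).
  move=> t tk.
  have := ord (Ordinal (ltnW tk)) => /forallP /(_ (Ordinal tk)) /implyP /(_ (eqxx _)).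
  rewrite {1 2}(ba_mat H) !minrow_mat ?size_wordof //.
  + exact: (ba_occ H (Ordinal tk)).
  + exact: (ba_occ H (Ordinal (ltnW tk))).
Qed.

Lemma exists_oba m k (B : 'M[nat]_(m, k)) : is_ba B -> exists s : {perm 'I_k}, is_oba (B *m perm_mx s)%R.
Proof.
move=> H.
case: k B H => [|k] B H.
  exists 1%g; rewrite perm_mx1 mulmx1; apply/andP; split => //.
  by apply/forallP => -[].
set w := wordof B.
pose rank (j : 'I_k.+1) := #|[set j' : 'I_k.+1 | index (j' : nat) w < index (j : nat) w]|.
have rk_lt : forall j, rank j < k.+1.
  move=> j; have : rank j <= #|[set~ j]|.
    apply: subset_leq_card; apply/subsetP => x; rewrite !inE => lt.
    by apply/eqP => E; move: lt; rewrite E ltnn.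
  rewrite cardsC1 card_ord; lia.
have idx_inj : forall j j' : 'I_k.+1, index (j : nat) w = index (j' : nat) w -> j = j'.
  move=> j j' E; apply: val_inj.
  by rewrite /= -(nth_index 0 (ba_occ H j)) -(nth_index 0 (ba_occ H j')) E.
have rank_mono : forall j j' : 'I_k.+1, index (j : nat) w <= index (j' : nat) w -> rank j <= rank j'.
  move=> j j' le; apply: subset_leq_card; apply/subsetP => x; rewrite !inE => lt.
  exact: leq_trans lt le.
have rank_strict : forall j j' : 'I_k.+1, index (j : nat) w < index (j' : nat) w -> rank j < rank j'.
  move=> j j' lt; apply: proper_card; apply/properP; split.
    apply/subsetP => x; rewrite !inE => lt'; exact: ltn_trans lt' lt.
  by exists j; rewrite !inE ?ltnn.
have rinj : injective (fun j => Ordinal (rk_lt j)).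
  move=> j j' /(congr1 val) /= E.
  case: (ltngtP (index (j : nat) w) (index (j' : nat) w)) => c.
  - by have := rank_strict _ _ c; rewrite E ltnn.
  - by have := rank_strict _ _ c; rewrite E ltnn.
  - exact: idx_inj.
pose s := perm rinj.
have sE : forall j, (s j : nat) = rank j by move=> j; rewrite permE.
pose g x := if x < k.+1 then (s (inord x) : nat) else x.
have gj : forall j : 'I_k.+1, g j = s j by move=> j; rewrite /g ltn_ord inord_val.
have ginj : injective g.
  move=> x y; rewrite /g; case: ifP => xk; case: ifP => yk.
  - move=> /val_inj /perm_inj /(congr1 (@nat_of_ord _)); rewrite !inordK //.
  - have := ltn_ord (s (inord x)); lia.
  - have := ltn_ord (s (inord y)); lia.
  - done.
exists s.
have -> : (B *m perm_mx s)%R = mat m k.+1 (map g w).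
  rewrite -[s]invgK -col_permE; apply/matrixP => i j.
  rewrite mxE matE (nth_map 0); last by rewrite size_wordof.
  have [j0 [E1 E2]] := ba_row H i.
  rewrite E2 E1 gj -{2}(permKV s j) /=.
  have -> : (val (s j0) == val (s (s^-1 j)%g)) = (s j0 == s (s^-1 j)%g) by [].
  by rewrite (inj_eq perm_inj).
have wl := ba_letters H.
apply: PW_oba; split.
- by rewrite size_map size_wordof.
- by move=> x /mapP [y /wl yk ->]; rewrite add0n /g yk.
- move=> j jk; rewrite add0n; apply/mapP; exists ((s^-1)%g (Ordinal jk) : nat).
    exact: ba_occ.
  by rewrite gj permKV.
- move=> t t' tt tk; rewrite !add0n.
  have tk' : t < k.+1 by lia.
  have -> : t = g ((s^-1)%g (Ordinal tk')) by rewrite gj permKV.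
  have -> : t' = g ((s^-1)%g (Ordinal tk)) by rewrite gj permKV.
  rewrite !index_map //.
  rewrite ltnNge; apply/negP => /rank_mono.
  rewrite -!sE !permKV /=; lia.
Qed.

Local Open Scope ring_scope.

Theorem theorem5p2 :
  forall k m r : nat, exists n : nat,
    forall c : 'M[nat]_(n, k) -> 'I_r,
      exists R : 'M[nat]_(n, m), is_oba R /\
        exists chat : {perm 'I_k} -> 'I_r,
          forall B : 'M[nat]_(m, k), is_ba B -> c (R *m B) = chat (piM B).
Proof.
move=> k m r.
have [n Hn] := GR_all k 0 m {ffun {perm 'I_k} -> 'I_r}.
exists n => c.
pose chi (w : seq nat) : {ffun {perm 'I_k} -> 'I_r} := [ffun s => c (mat n k w *m perm_mx s)].
have [F [PF HF]] := Hn chi.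
exists (mat n m F); split; first exact: PW_oba.
pose w0 := epsilon (inhabits [::]) (fun w => PW 0 m k w).
exists (fun p => chi (pcomp 0 F w0) (p^-1)%g).
move=> B HB.
have pB : is_oba (B *m perm_mx (piM B)).
  rewrite /piM; case: pickP => [s Hs | none] //=.
  by have [s Hs] := exists_oba HB; rewrite none in Hs.
set B' := B *m perm_mx (piM B) in pB.
have PB' := oba_PW pB.
have EB' : B' = mat m k (wordof B') by apply: ba_mat; case/andP: pB.
have EB : B = B' *m perm_mx (piM B)^-1 by rewrite /B' -mulmxA -perm_mxM mulgV perm_mx1 mulmx1.
have Pw0 : PW 0 m k w0 by apply: (epsilon_spec (inhabits [::]) (fun w => PW 0 m k w)); exists (wordof B').
have [sF lF _ _] := PF.
have -> : mat n m F *m B = mat n k (pcomp 0 F (wordof B')) *m perm_mx (piM B)^-1.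
  by rewrite {1}EB {1}EB' mulmxA mat_mul //; move=> x /lF.
have := congr1 (fun f : {ffun {perm 'I_k} -> 'I_r} => f (piM B)^-1%g) (HF _ _ PB' Pw0).
by rewrite !ffunE.
Qed.
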